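(* Let $G=(Q,\Sigma,\delta_G,q_0,Q_m)$ be a DFA, $\Sigma_o$ a subset of $\Sigma$, $H=T_{\Sigma_o}(G)$, let $G'$ be a DFA with $G'\sqsubseteq G$, and $H'=T_{\Sigma_o}(G')$. If $match_{\Sigma_o}\leq\rho_{G,G'}$, then for all $s,s'\in L(H)$ with $s\equiv s'\bmod eq(H)$ we have $s\equiv s'\bmod eq(H')$.
   Context: DFA $G$, $L(G)=\{s:\delta_G(q_0,s)\text{ defined}\}$, natural projection $P_{\Sigma_o}$. $\epsilon R_G(q)=\{\delta_G(q,s):P_{\Sigma_o}(s)=\epsilon\}$. The observer $T_{\Sigma_o}(G)$ is the DFA over $\Sigma_o$ with subset states, initial state $\epsilon R_G(q_0)$, transitions $\delta(B,\sigma)=\bigcup_{q\in B,\ \delta_G(q,\sigma)\text{ defined}}\epsilon R_G(\delta_G(q,\sigma))$ (defined iff nonempty), accessible part. $G'\sqsubseteq G$ means $\delta_{G'}(q'_0,s)=\delta_G(q_0,s)$ for all $s\in L(G')$. For a DFA $K$ with initial state $k_0$, $eq(K)$ relates $s,s'$ iff $\delta_K(k_0,s)=\delta_K(k_0,s')$, both being undefined counting as equal. $match_{\Sigma_o}$ on $\Sigma^*$: $(s,s')\in match_{\Sigma_o}$ iff $s\equiv s'\bmod eq(G)$ and $P_{\Sigma_o}(s)\equiv P_{\Sigma_o}(s')\bmod eq(H)$, and if $s\notin L(G)$ then $(s,s')\in match_{\Sigma_o}$ iff $s'\notin L(G)$. $\rho_{G,G'}$ on $\Sigma^*$: $(s,s')\in\rho_{G,G'}$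 iff both lie in $L(G')$, or both lie in $L(G)\setminus L(G')$, or both lie in $\Sigma^*\setminus L(G)$. For binary relations $\rho_1,\rho_2$ on a set $X$, $\rho_1\leq\rho_2$ means $(x,y)\in\rho_1\Rightarrow(x,y)\in\rho_2$ for all $x,y$. *)

(* Defs.v *)
From mathcomp Require Import all_boot.
From mathcomp Require Import boolp.
Set Implicit Arguments. Unset Strict Implicit. Unset Printing Implicit Defensive.

Record dfa (Q A : finType) := DFA {
  trans : Q -> A -> option Q;
  init : Q;
  marked : pred Q }.

Section DFA.
Variables (Q A : finType).

Definition deltas (K : dfa Q A) (q : Q) (s : seq A) : option Q :=
  foldl (fun oq a => obind (fun q' => trans K q' a) oq) (Some q) s.

Definition inL (K : dfa Q A) (s : seq A) : Prop := deltas K (init K) s <> None.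

(* eq(K): delta(k0,s) = delta(k0,s'), both undefined counting as equal *)
Definition eqK (K : dfa Q A) (s s' : seq A) : Prop :=
  deltas K (init K) s = deltas K (init K) s'.

Definition subDFA (G' G : dfa Q A) : Prop :=
  forall s, inL G' s -> deltas G' (init G') s = deltas G (init G) s.
End DFA.

Section Observer.
Variables (Q S : finType) (So : {set S}).

Definition obsA := {x : S | x \in So}.

Definition proj (s : seq S) : seq obsA := pmap (fun a => insub a) s.

Definition eR (G : dfa Q S) (q : Q) : {set Q} :=
  [set q' | `[< exists s, proj s = [::] /\ deltas G q s = Some q' >]].

Definition obs_trans (G : dfa Q S) (B : {set Q}) (a : obsA) : option {set Q} :=
  let B' := \bigcup_(q in B)
              match trans G q (val a) with Some q1 => eR G q1 | None => set0 end in
  if B' == set0 then None else Some B'.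

(* observer T_{Sigma_o}(G); states are subsets of Q (restricting to the
   accessible part does not change L or eq) *)
Definition observer (G : dfa Q S) : dfa {set Q} obsA :=
  @DFA _ _ (obs_trans G) (eR G (init G)) (fun B => B :&: [set q | marked G q] != set0).

Definition matchR (G : dfa Q S) (s s' : seq S) : Prop :=
  if `[< inL G s >] then eqK G s s' /\ eqK (observer G) (proj s) (proj s')
  else ~ inL G s'.

Definition rhoR (G G' : dfa Q S) (s s' : seq S) : Prop :=
  (inL G' s /\ inL G' s') \/
  ((inL G s /\ ~ inL G' s) /\ (inL G s' /\ ~ inL G' s')) \/
  (~ inL G s /\ ~ inL G s').

Definition rel_le (X : Type) (r1 r2 : X -> X -> Prop) : Prop :=
  forall x y, r1 x y -> r2 x y.
End Observer.

(* Main.v *)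
Require Import Defs.
From mathcomp Require Import all_boot.
From mathcomp Require Import boolp.
Set Implicit Arguments. Unset Strict Implicit. Unset Printing Implicit Defensive.

Section Aux.
Variables (Q S : finType) (So : {set S}).

Lemma foldl_None (K : dfa Q S) v :
  foldl (fun oq a => obind (fun q' => trans K q' a) oq) None v = None.
Proof. by elim: v. Qed.

Lemma deltas_cat (K : dfa Q S) q u v :
  deltas K q (u ++ v) = obind (fun q' => deltas K q' v) (deltas K q u).
Proof.
rewrite /deltas foldl_cat.
by case: (foldl _ _ u) => [q'|] /=; [done | apply: foldl_None].
Qed.

Lemma deltas_cons (K : dfa Q S) q a v :
  deltas K q (a :: v) = match trans K q a with Some q' => deltas K q' v | None => None end.
Proof. rewrite /deltas /=; case: (trans K q a) => // ; exact: foldl_None. Qed.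

Definition X (K : dfa Q S) (t : seq (obsA So)) : {set Q} :=
  [set q | `[< exists u, proj So u = t /\ deltas K (init K) u = Some q >]].

Lemma inX (K : dfa Q S) t q :
  (q \in X K t) <-> exists u, proj So u = t /\ deltas K (init K) u = Some q.
Proof. by rewrite inE; split => [/asboolP|H]; [|apply/asboolP]. Qed.

Lemma proj_rcons u t a : proj So u = rcons t a ->
  exists u1 b u2, [/\ u = u1 ++ b :: u2, proj So u1 = t, insub b = Some a
                    & proj So u2 = [::]].
Proof.
elim/last_ind: u t a => [|v b IH] t a; first by case: t.
rewrite /proj -cats1 pmap_cat /=.
case Hb: (insub b) => [a0|] /=.
  rewrite cats1 => /rcons_inj [E1 E2]; subst.
  by exists v, b, [::]; split => //; rewrite cats1.
rewrite cats0 => /IH [u1 [b' [u2 [E1 E2 E3 E4]]]].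
exists u1, b', (rcons u2 b); split => //.
  by rewrite E1 -cats1 -catA.
by rewrite -cats1 pmap_cat /= Hb; move: E4; rewrite /proj => ->.
Qed.

Lemma obs_deltas (K : dfa Q S) t :
  deltas (observer So K) (init (observer So K)) t =
  if X K t == set0 then None else Some (X K t).
Proof.
elim/last_ind: t => [|t a IH].
  have E : X K [::] = eR So K (init K).
    by apply/setP => q; rewrite /X /eR !inE.
  rewrite E; case: ifP => [/eqP E0|] //.
  have : init K \in eR So K (init K).
    by rewrite inE; apply/asboolP; exists [::].
  by rewrite E0 inE.
have EX : X K (rcons t a) = \bigcup_(q in X K t)
   match trans K q (val a) with Some q1 => eR So K q1 | None => set0 end.
  apply/setP => q'; apply/idP/idP.
    move/inX => [u [Hu Hd]].
    have [u1 [b [u2 [E1 E2 E3 E4]]]] := proj_rcons Hu.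
    subst u. move: Hd; rewrite deltas_cat.
    case Hd1: (deltas K (init K) u1) => [q|] //= .
    rewrite deltas_cons.
    have Eb : val a = b by move: E3; case: insubP => // c _ <- [<-].
    case Ht: (trans K q b) => [q1|] // Hd2.
    apply/bigcupP; exists q; first by apply/inX; exists u1.
    by rewrite Eb Ht inE; apply/asboolP; exists u2.
  move/bigcupP => [q /inX [u1 [Hu1 Hd1]]].
  case Ht: (trans K q (val a)) => [q1|]; last by rewrite inE.
  rewrite inE => /asboolP [u2 [Hp Hd2]].
  apply/inX; exists (u1 ++ val a :: u2); split.
    by rewrite /proj pmap_cat /= valK /= -/(proj So u2) Hp -/(proj So u1) Hu1 cats1.
  by rewrite deltas_cat Hd1 /= deltas_cons Ht.
rewrite /deltas foldl_rcons -/(deltas _ _ t) IH.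
case: ifP => [/eqP E0|_] /=.
  suff -> : X K (rcons t a) = set0 by rewrite eqxx.
  by rewrite EX E0 big_set0.
by rewrite /obs_trans -EX.
Qed.

End Aux.

Theorem lemma5 (Q S : finType) (G G' : dfa Q S) (So : {set S}) :
  subDFA G' G ->
  rel_le (matchR So G) (rhoR G G') ->
  forall s s' : seq (obsA So),
    inL (observer So G) s -> inL (observer So G) s' ->
    eqK (observer So G) s s' -> eqK (observer So G') s s'.
Proof.
move=> Hsub Hrel s s' Hs Hs' Heq.
have XE : X G s = X G s'.
  move: Heq Hs; rewrite /eqK /inL !obs_deltas.
  by case: ifP => _; case: ifP => _ // [].
have key : forall t t' : seq (obsA So), X G t = X G t' -> X G' t \subset X G' t'.
  move=> t t' Ett; apply/subsetP => q /inX [u [Hu Hd]].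
  have HinL' : inL G' u by rewrite /inL Hd.
  have HdG : deltas G (init G) u = Some q by rewrite -Hsub.
  have : q \in X G t by apply/inX; exists u.
  rewrite Ett => /inX [u' [Hu' Hd']].
  have HinL : inL G u by rewrite /inL HdG.
  have Hm : matchR So G u u'.
    rewrite /matchR (asboolT HinL); split; first by rewrite /eqK HdG Hd'.
    by rewrite /eqK !obs_deltas Hu Hu' Ett.
  case: (Hrel _ _ Hm) => [[_ H2]|[[[_ H]] _|[H _]]] //.
  apply/inX; exists u'; split => //.
  by rewrite Hsub.
rewrite /eqK !obs_deltas.
suff -> : X G' s = X G' s' by [].
by apply/eqP; rewrite eqEsubset !key.
Qed.
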